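(* For positive integers $D_1,D_2$, integers $a,b$ with $(a,D_1)=(b,D_2)=1$, and integers $u,t$, \[ \widehat S(a,u,t,b;D_1,D_2)=\widehat S(b,t,u,a;D_2,D_1). \]
   Context: Notation: $e(x)=e^{2\pi ix}$. For integers $m_1,m_2,n_1,n_2$ and positive integers $D_1,D_2$, the $GL_3$ Kloosterman sum is \[ S(m_1,m_2,n_1,n_2;D_1,D_2)=\sum e\Big(\frac{m_1B_1+n_1(Y_1D_2-Z_1B_2)}{D_1}\Big)e\Big(\frac{m_2B_2+n_2(Y_2D_1-Z_2B_1)}{D_2}\Big), \] the sum over $B_1,C_1 \bmod D_1$, $B_2,C_2\bmod D_2$ with $\gcd(B_1,C_1,D_1)=\gcd(B_2,C_2,D_2)=1$ and $D_1C_2+B_1B_2+C_1D_2\equiv 0\pmod{D_1D_2}$, where $Y_1B_1+Z_1C_1\equiv 1\pmod{D_1}$, $Y_2B_2+Z_2C_2\equiv1\pmod{D_2}$ (independent of choices). For $(a,D_1)=(b,D_2)=1$, \[ \widehat S(a,u,t,b;D_1,D_2)=\frac{1}{D_1D_2}\sum_{x\bmod D_1}\sum_{y\bmod D_2}S(a,y,x,b;D_1,D_2)\,e\Big(\frac{-xt}{D_1}\Big)e\Big(\frac{-yu}{D_2}\Big). \] *)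

(* Defs.v *)
From HB Require Import structures.
From mathcomp Require Import all_boot all_order all_algebra.
From mathcomp Require Import reals trigo.
From mathcomp Require Import complex.
Set Implicit Arguments. Unset Strict Implicit. Unset Printing Implicit Defensive.
Import Order.TTheory GRing.Theory Num.Theory.
Local Open Scope ring_scope.
Local Open Scope complex_scope.

Section GL3.
Variable R : realType.

Definition ee (x : R) : R[i] := (cos (2 * pi * x) +i* sin (2 * pi * x))%C.

Definition eq_frac (k : int) (D : nat) : R[i] := ee (k%:~R / D%:R).

Definition coprime3 (B C D : nat) : bool := gcdn (gcdn B C) D == 1%N.

(* a choice of (Y, Z) mod D with Y B + Z C = 1 (mod D); any choice is fine
   since the sum is independent of it; default (0,0) if none exists *)
Definition YZ (D : nat) (B C : 'I_D) : int * int :=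
  match [pick p : 'I_D * 'I_D |
           ((p.1 : nat)%:Z * (B : nat)%:Z + (p.2 : nat)%:Z * (C : nat)%:Z
              == 1 %[mod (D : nat)%:Z])%Z] with
  | Some p => ((p.1 : nat)%:Z, (p.2 : nat)%:Z)
  | None => (0, 0)
  end.

Definition Kl3 (m1 m2 n1 n2 : int) (D1 D2 : nat) : R[i] :=
  \sum_(B1 : 'I_D1) \sum_(C1 : 'I_D1) \sum_(B2 : 'I_D2) \sum_(C2 : 'I_D2)
    if [&& coprime3 B1 C1 D1, coprime3 B2 C2 D2 &
          ((D1%:Z * (C2 : nat)%:Z + (B1 : nat)%:Z * (B2 : nat)%:Z
             + (C1 : nat)%:Z * D2%:Z) == 0 %[mod (D1 * D2)%N%:Z])%Z]
    then
      let Y1 := (YZ B1 C1).1 in let Z1 := (YZ B1 C1).2 in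
      let Y2 := (YZ B2 C2).1 in let Z2 := (YZ B2 C2).2 in
      eq_frac (m1 * (B1 : nat)%:Z + n1 * (Y1 * D2%:Z - Z1 * (B2 : nat)%:Z)) D1
      * eq_frac (m2 * (B2 : nat)%:Z + n2 * (Y2 * D1%:Z - Z2 * (B1 : nat)%:Z)) D2
    else 0.

Definition Shat (a u t b : int) (D1 D2 : nat) : R[i] :=
  ((D1 * D2)%N%:R)^-1 *
  \sum_(x : 'I_D1) \sum_(y : 'I_D2)
     Kl3 a (y : nat)%:Z (x : nat)%:Z b D1 D2
     * eq_frac (- ((x : nat)%:Z * t)) D1 * eq_frac (- ((y : nat)%:Z * u)) D2.

End GL3.

(* Main.v *)
Require Import Defs.
From HB Require Import structures.
From mathcomp Require Import all_boot all_order all_algebra.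
From mathcomp Require Import reals trigo.
From mathcomp Require Import complex.
From mathcomp Require Import ring.
Import Order.TTheory GRing.Theory Num.Theory.
Local Open Scope ring_scope.
Set Implicit Arguments. Unset Strict Implicit.

Lemma certz (M X Q c1 c2 c3 c4 c5 c6 e1 e2 e3 e4 e5 e6 : int) :
  e1 = 0 -> e2 = 0 -> e3 = 0 -> e4 = 0 -> e5 = 0 -> e6 = 0 ->
  X - Q * M = c1 * e1 + c2 * e2 + c3 * e3 + c4 * e4 + c5 * e5 + c6 * e6 ->
  (M %| X)%Z.
Proof.
move=> -> -> -> -> -> -> E; apply/dvdzP; exists Q.
by apply/eqP; rewrite -subr_eq0 E !mulr0 !addr0.
Qed.

Lemma eq0D (x y : int) : x = y -> x - y = 0.
Proof. by move->; rewrite subrr. Qed.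

Definition RelW (D1 D2 B1 C1 B2 C2 B1' C1' B2' C2' Y1 Z1 Y2 Z2 : int) : Prop :=
  [/\ (D1 %| Y1*B1 + Z1*C1 - 1)%Z, (D2 %| Y2*B2 + Z2*C2 - 1)%Z,
      (D2 %| Y2*D1 - Z2*B1 - B1')%Z, (D1 %| Y1*D2 - Z1*B2 - B2')%Z &
      ((D1*D2 %| D1*C1' - D1*Z1 - (Y1*D2 - Z1*B2 - B2')*(Y2*D1 - Z2*B1))%Z /\
      (D1*D2 %| D2*C2' - D2*Z2 - (Y2*D1 - Z2*B1 - B1')*(Y1*D2 - Z1*B2))%Z)].

Definition Rel (D1 D2 B1 C1 B2 C2 B1' C1' B2' C2' : int) : Prop :=
  exists Y1 Z1 Y2 Z2, RelW D1 D2 B1 C1 B2 C2 B1' C1' B2' C2' Y1 Z1 Y2 Z2.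

Lemma cancel_l (D x y : int) : D != 0 -> D * (x - y) = 0 -> x = y.
Proof. by move=> nz /eqP; rewrite mulf_eq0 (negbTE nz) /= subr_eq0 => /eqP. Qed.

Lemma Rel_sym (D1 D2 B1 C1 B2 C2 B1' C1' B2' C2' : int) :
  D1 != 0 -> D2 != 0 -> (D1*D2 %| D1*C2 + B1*B2 + C1*D2)%Z ->
  Rel D1 D2 B1 C1 B2 C2 B1' C1' B2' C2' ->
  Rel D2 D1 B1' C1' B2' C2' B1 C1 B2 C2 /\ (D2*D1 %| D2*C2' + B1'*B2' + C1'*D1)%Z.
Proof.
move=> nz1 nz2 /dvdzP[kP /eq0D hP] [Y1 [Z1 [Y2 [Z2 []]]]].
move=> /dvdzP[k1 /eq0D h1] /dvdzP[k2 /eq0D h2] /dvdzP[w1 e1] /dvdzP[w2 e2]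
  [/dvdzP[m1 e3] /dvdzP[m2 e4]].
have eB1 : B1' = Y2*D1 - Z2*B1 - w1*D2 by rewrite -e1; ring.
have eB2 : B2' = Y1*D2 - Z1*B2 - w2*D1 by rewrite -e2; ring.
subst B1' B2'.
have eC1 : C1' = Z1 + w2*(Y2*D1 - Z2*B1) + m1*D2.
  apply: (cancel_l nz1); rewrite -(subrr (m1 * (D1 * D2))) -{1}e3; ring.
have eC2 : C2' = Z2 + w1*(Y1*D2 - Z1*B2) + m2*D1.
  apply: (cancel_l nz2); rewrite -(subrr (m2 * (D1 * D2))) -{1}e4; ring.
subst C1' C2'.
have z0 : (0:int) = 0 by [].
split; last first.
  apply: (certz (Q:=(Y1 * Y2 + Z1 * Z2 * kP - Z1 * k2 - Z2 * k1 + m1 + m2 + w1 * w2)) (c1:=(-D2 * Z2)) (c2:=(-D1 * Z1)) (c3:=(Z1 * Z2)) (c4:=0) (c5:=0) (c6:=0) h1 h2 hP z0 z0 z0); ring.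
exists (-B2 * k1 - C1 * w2 - C2 * Y1 + D2 * Y1 * kP), (C1), (-B1 * k2 - C1 * Y2 - C2 * w1), (C2); split; [| | | | split].
- apply: (certz (Q:=(-B1 * Y1 * Z2 * kP + B1 * Y1 * k2 + B2 * k1 * w1 + C1 * Y1 * Y2 - C1 * Z2 * k1 + C1 * m1 + C1 * w1 * w2 + C2 * Y1 * w1 + D1 * Z2 * k1 * kP - D1 * k1 * k2 - D2 * Y1 * kP * w1)) (c1:=(1)) (c2:=(B1 * Y1 - D1 * k1)) (c3:=(-Y1 * Y2 + Z2 * k1)) (c4:=0) (c5:=0) (c6:=0) h1 h2 hP z0 z0 z0); ring.
- apply: (certz (Q:=(B1 * k2 * w2 + B2 * Y2 * k1 + C1 * Y2 * w2 + C2 * Y1 * Y2 - C2 * Z1 * k2 + C2 * m2 + C2 * w1 * w2 - D2 * Y1 * Y2 * kP + D2 * Z1 * k2 * kP - D2 * k1 * k2)) (c1:=(B2 * Y2 - D2 * k2)) (c2:=(1)) (c3:=(-Y1 * Y2 + Z1 * k2)) (c4:=0) (c5:=0) (c6:=0) h1 h2 hP z0 z0 z0); ring.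
- apply: (certz (Q:=(-D2 * Y2 * kP)) (c1:=0) (c2:=(B1)) (c3:=(-Y2)) (c4:=0) (c5:=0) (c6:=0) h1 h2 hP z0 z0 z0); ring.
- apply: (certz (Q:=0) (c1:=(B2)) (c2:=0) (c3:=(-Y1)) (c4:=0) (c5:=0) (c6:=0) h1 h2 hP z0 z0 z0); ring.
- apply: (certz (Q:=0) (c1:=(-B1 * B2 * C2 * Z2 + B1 * B2 * D2 * k2 + B2 * C1 * D2 * Y2 + B2 * C2 * D1 * Y2)) (c2:=(B1 * C1 * D2 * Y1 + B1 * C2 * D1 * Y1 - B1 * D1 * D2 * Y1 * kP + B1 * B1 * B2 * Y1)) (c3:=(-B1 * B2 * Y1 * Y2 + B1 * Y1 - C1 * D2 * Y1 * Y2 - C2 * D1 * Y1 * Y2)) (c4:=0) (c5:=0) (c6:=0) h1 h2 hP z0 z0 z0); ring.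
- apply: (certz (Q:=(B2 * Y2 * kP)) (c1:=(B1 * B2 - B1 * B2 * C2 * Z2 + B1 * B2 * D2 * k2 + B2 * C1 * D2 * Y2 + B2 * C2 * D1 * Y2)) (c2:=(-B1 * B2 + B1 * C1 * D2 * Y1 + B1 * C2 * D1 * Y1 - B1 * D1 * D2 * Y1 * kP + B1 * B1 * B2 * Y1)) (c3:=(-B1 * B2 * Y1 * Y2 + B2 * Y2 - C1 * D2 * Y1 * Y2 - C2 * D1 * Y1 * Y2)) (c4:=0) (c5:=0) (c6:=0) h1 h2 hP z0 z0 z0); ring.
Qed.


Lemma kernel (D B C Y Z Ys Zs k ks : int) : Y*B + Z*C - 1 = k*D -> Ys*B + Zs*C - 1 = ks*D ->
  exists l p q, Ys = Y + l*C + p*D /\ Zs = Z - l*B + q*D.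
Proof.
move=> /eq0D e /eq0D es.
exists (Z*(Ys-Y) - Y*(Zs-Z)), (Y*(ks-k) - k*(Ys-Y)), (Z*(ks-k) - k*(Zs-Z)).
split; apply/eqP; rewrite -subr_eq0; apply/eqP.
- have -> : Ys - (Y + (Z*(Ys-Y) - Y*(Zs-Z))*C + (Y*(ks-k) - k*(Ys-Y))*D) =
     -Ys * (Y*B + Z*C - 1 - k*D) + Y*(Ys*B + Zs*C - 1 - ks*D) by ring.
  by rewrite e es !mulr0 addr0.
- have -> : Zs - (Z - (Z*(Ys-Y) - Y*(Zs-Z))*B + (Z*(ks-k) - k*(Zs-Z))*D) =
     -Zs * (Y*B + Z*C - 1 - k*D) + Z*(Ys*B + Zs*C - 1 - ks*D) by ring.
  by rewrite e es !mulr0 addr0.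
Qed.

Lemma res_eq (D x y : int) : 0 <= x < D -> 0 <= y < D -> (D %| x - y)%Z -> x = y.
Proof.
by move=> hx hy; rewrite -eqz_mod_dvd (modz_small hx) (modz_small hy) => /eqP.
Qed.

Lemma Rel_fun (D1 D2 B1 C1 B2 C2 B1a C1a B2a C2a B1b C1b B2b C2b : int) :
  0 < D1 -> 0 < D2 -> (D1*D2 %| D1*C2 + B1*B2 + C1*D2)%Z ->
  Rel D1 D2 B1 C1 B2 C2 B1a C1a B2a C2a -> Rel D1 D2 B1 C1 B2 C2 B1b C1b B2b C2b ->
  0 <= B1a < D2 -> 0 <= C1a < D2 -> 0 <= B2a < D1 -> 0 <= C2a < D1 ->
  0 <= B1b < D2 -> 0 <= C1b < D2 -> 0 <= B2b < D1 -> 0 <= C2b < D1 ->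
  [/\ B1a = B1b, C1a = C1b, B2a = B2b & C2a = C2b].
Proof.
move=> hD1 hD2 /dvdzP[kP /eq0D hP].
move=> [Y1 [Z1 [Y2 [Z2 [/dvdzP[k1 h1] /dvdzP[k2 h2] /dvdzP[w1 a3] /dvdzP[w2 a4] [/dvdzP[ma a5] /dvdzP[na a6]]]]]]].
move=> [Y1s [Z1s [Y2s [Z2s [/dvdzP[k1s h1s] /dvdzP[k2s h2s] /dvdzP[w1s b3] /dvdzP[w2s b4] [/dvdzP[mb b5] /dvdzP[nb b6]]]]]]].
move=> rB1a rC1a rB2a rC2a rB1b rC1b rB2b rC2b.
have [l1 [p1 [q1 [eY1 eZ1]]]] := kernel h1 h1s.
have [l2 [p2 [q2 [eY2 eZ2]]]] := kernel h2 h2s.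
subst Y1s Z1s Y2s Z2s.
move/eq0D in h1; move/eq0D in h2.
have eB1a : B1a = Y2*D1 - Z2*B1 - w1*D2 by rewrite -a3; ring.
have eB2a : B2a = Y1*D2 - Z1*B2 - w2*D1 by rewrite -a4; ring.
have eB1b : B1b = (Y2 + l2*C2 + p2*D2)*D1 - (Z2 - l2*B2 + q2*D2)*B1 - w1s*D2 by rewrite -b3; ring.
have eB2b : B2b = (Y1 + l1*C1 + p1*D1)*D2 - (Z1 - l1*B1 + q1*D1)*B2 - w2s*D1 by rewrite -b4; ring.
subst B1a B2a B1b B2b.
have z0 : (0:int) = 0 by [].
have nz1 : D1 != 0 by rewrite gt_eqF.
have nz2 : D2 != 0 by rewrite gt_eqF.
have EB1 : Y2*D1 - Z2*B1 - w1*D2 = (Y2 + l2*C2 + p2*D2)*D1 - (Z2 - l2*B2 + q2*D2)*B1 - w1s*D2.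
  apply: (res_eq rB1a rB1b).
  apply: (certz (Q:=(B1 * q2 + C1 * l2 - D1 * kP * l2 - D1 * p2 - w1 + w1s)) (c1:=0) (c2:=0) (c3:=(-l2)) (c4:=0) (c5:=0) (c6:=0) h1 h2 hP z0 z0 z0); ring.
have EB2 : Y1*D2 - Z1*B2 - w2*D1 = (Y1 + l1*C1 + p1*D1)*D2 - (Z1 - l1*B1 + q1*D1)*B2 - w2s*D1.
  apply: (res_eq rB2a rB2b).
  apply: (certz (Q:=(B2 * q1 + C2 * l1 - D2 * kP * l1 - D2 * p1 - w2 + w2s)) (c1:=0) (c2:=0) (c3:=(-l1)) (c4:=0) (c5:=0) (c6:=0) h1 h2 hP z0 z0 z0); ring.
have EC1 : C1a = C1b.
  apply: (res_eq rC1a rC1b).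
  have eB := eq0D EB2; have ea := eq0D a5; have eb := eq0D b5.
  have : (D1*D2 %| D1*(C1a - C1b))%Z.
    apply: (certz (Q:=(-B1 * C2 * l1 * q2 + B1 * D2 * kP * l1 * q2 + B1 * D2 * p1 * q2 + B1 * Z2 * kP * l1 + B1 * Z2 * p1 - B1 * k2 * l1 + B1 * q2 * w2 - B2 * C1 * l2 * q1 + B2 * D1 * kP * l2 * q1 + B2 * D1 * p2 * q1 - C1 * C2 * l1 * l2 + C1 * D2 * kP * l1 * l2 + C1 * D2 * l2 * p1 + C1 * D2 * q1 * q2 - C1 * Y2 * l1 + C1 * Z2 * q1 + C1 * l2 * w2 + C2 * D1 * kP * l1 * l2 + C2 * D1 * l1 * p2 + C2 * D1 * q1 * q2 - D1 * D2 * kP * l1 * p2 - D1 * D2 * kP * l2 * p1 - D1 * D2 * kP * q1 * q2 - D1 * D2 * kP * kP * l1 * l2 - D1 * D2 * p1 * p2 - D1 * Y2 * p1 - D1 * Z2 * kP * q1 + D1 * k2 * q1 - D1 * kP * l2 * w2 - D1 * p2 * w2 + ma - mb)) (c1:=0) (c2:=(-B1 * D1 * l1 + D1 * D1 * q1)) (c3:=(B1 * D2 * l1 * q2 + B1 * Z2 * l1 + C1 * D2 * l1 * l2 - D1 * D2 * kP * l1 * l2 - D1 * D2 * l1 * p2 - D1 * D2 * q1 * q2 - D1 * Z2 * q1 - D1 * l2 * w2s)) (c4:=(1)) (c5:=(-1)) (c6:=(B1 * D2 * q2 + B1 * Z2 + C1 * D2 * l2 - D1 * D2 * kP * l2 -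 D1 * D2 * p2 - D1 * Y2)) h1 h2 hP ea eb eB); ring.
  by rewrite dvdz_mul2l.
have EC2 : C2a = C2b.
  apply: (res_eq rC2a rC2b).
  have eB := eq0D EB1; have ea := eq0D a6; have eb := eq0D b6.
  have : (D2*D1 %| D2*(C2a - C2b))%Z.
    apply: (certz (Q:=(-B1 * C2 * l1 * q2 + B1 * D2 * kP * l1 * q2 + B1 * D2 * p1 * q2 - B2 * C1 * l2 * q1 + B2 * D1 * kP * l2 * q1 + B2 * D1 * p2 * q1 + B2 * Z1 * kP * l2 + B2 * Z1 * p2 - B2 * k1 * l2 + B2 * q1 * w1 - C1 * C2 * l1 * l2 + C1 * D2 * kP * l1 * l2 + C1 * D2 * l2 * p1 + C1 * D2 * q1 * q2 + C2 * D1 * kP * l1 * l2 + C2 * D1 * l1 * p2 + C2 * D1 * q1 * q2 - C2 * Y1 * l2 + C2 * Z1 * q2 + C2 * l1 * w1 - D1 * D2 * kP * l1 * p2 - D1 * D2 * kP * l2 * p1 - D1 * D2 * kP * q1 * q2 - D1 * D2 * kP * kP * l1 * l2 - D1 * D2 * p1 * p2 - D2 * Y1 * p2 - D2 * Z1 * kP * q2 + D2 * k1 * q2 - D2 * kP * l1 * w1 - D2 * p1 * w1 + na - nb)) (c1:=(-B2 * D2 * l2 + D2 * D2 * q2)) (c2:=0) (c3:=(B2 * D1 * l2 * q1 + B2 * Z1 * l2 + C2 * D1 * l1 * l2 - D1 * D2 * kP * l1 * l2 - D1 * D2 * l2 * p1 - D1 * D2 * q1 * q2 - D2 * Z1 *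 q2 - D2 * l1 * w1s)) (c4:=(1)) (c5:=(-1)) (c6:=(B2 * D1 * q1 + B2 * Z1 + C2 * D1 * l1 - D1 * D2 * kP * l1 - D1 * D2 * p1 - D2 * Y1)) h1 h2 hP ea eb eB); ring.
  by rewrite dvdz_mul2l.
by split.
Qed.



Lemma ordz_lt (D : nat) (hD : (0 < D)%N) (x : int) : (`|(x %% D%:Z)%Z| < D)%N.
Proof.
have hD' : (0 < D%:Z) by rewrite ltz_nat.
rewrite -ltz_nat gez0_abs ?modz_ge0 ?ltz_pmod // gt_eqF //.
Qed.

Definition ordz (D : nat) (hD : (0 < D)%N) (x : int) : 'I_D := Ordinal (ordz_lt hD x).

Lemma ordzE (D : nat) (hD : (0 < D)%N) (x : int) : ((ordz hD x : nat)%:Z) = (x %% D%:Z)%Z.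
Proof.
have hD' : (0 < D%:Z) by rewrite ltz_nat.
by rewrite /= gez0_abs // modz_ge0 // gt_eqF.
Qed.

Lemma ord_range (D : nat) (i : 'I_D) : 0 <= (i : nat)%:Z < D%:Z.
Proof. by rewrite lez_nat leq0n ltz_nat ltn_ord. Qed.

Lemma coprime3_of (D B C : nat) (Y Z : int) :
  (D%:Z %| Y * B%:Z + Z * C%:Z - 1)%Z -> coprime3 B C D.
Proof.
move=> h; rewrite /coprime3.
set g := gcdn (gcdn B C) D.
have gB : (g%:Z %| B%:Z)%Z by rewrite dvdzE /= (dvdn_trans (dvdn_gcdl _ _) (dvdn_gcdl _ _)).
have gC : (g%:Z %| C%:Z)%Z by rewrite dvdzE /= (dvdn_trans (dvdn_gcdl _ _) (dvdn_gcdr _ _)).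
have gD : (g%:Z %| D%:Z)%Z by rewrite dvdzE /= dvdn_gcdr.
have H : (g%:Z %| (Y * B%:Z + Z * C%:Z) - (Y * B%:Z + Z * C%:Z - 1))%Z.
  apply: rpredB; [by rewrite rpredD ?dvdz_mull | exact: (dvdz_trans gD h)].
have E : (Y * B%:Z + Z * C%:Z) - (Y * B%:Z + Z * C%:Z - 1) = 1 by ring.
rewrite E in H.
by move: H; rewrite dvdz1.
Qed.

Lemma YZ_spec (D : nat) (B C : 'I_D) : coprime3 B C D ->
  (D%:Z %| (YZ B C).1 * (B : nat)%:Z + (YZ B C).2 * (C : nat)%:Z - 1)%Z.
Proof.
move=> hc; rewrite /YZ; case: pickP => [p /= | none].
  by rewrite eqz_mod_dvd.
exfalso.
have hD : (0 < D)%N by apply: leq_ltn_trans (ltn_ord B).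
have [u [v huv]] := Bezoutz (B : nat)%:Z (C : nat)%:Z.
have [u' [v' huv']] := Bezoutz (gcdz (B : nat)%:Z (C : nat)%:Z) D%:Z.
move: huv'; rewrite /gcdz /= -/(gcdn (gcdn B C) D).
have -> : gcdn (gcdn B C) D = 1%N by apply/eqP.
move=> huv'.
have := none (ordz hD (u' * u), ordz hD (u' * v)).
rewrite /= eqz_mod_dvd !ordzE // => /negbT/negP; apply.
have -> : modz (u' * u) D%:Z * (B : nat)%:Z + modz (u' * v) D%:Z * (C : nat)%:Z - 1
   = (modz (u' * u) D%:Z - u' * u) * (B : nat)%:Z + (modz (u' * v) D%:Z - u' * v) * (C : nat)%:Z
     - v' * D%:Z + (u' * (u * (B : nat)%:Z + v * (C : nat)%:Z) + v' * D%:Z - 1) by ring.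
rewrite huv /gcdz /= huv' subrr addr0.
rewrite rpredB ?dvdz_mull // rpredD // dvdz_mulr //.
  have -> : (modz (u' * u) D%:Z - u' * u) = - divz (u' * u) D%:Z * D%:Z.
    by rewrite {2}(divz_eq (u' * u) D%:Z); ring.
  by rewrite dvdz_mull.
have -> : (modz (u' * v) D%:Z - u' * v) = - divz (u' * v) D%:Z * D%:Z.
  by rewrite {2}(divz_eq (u' * v) D%:Z); ring.
by rewrite dvdz_mull.
Qed.



Lemma per_int (R : realType) (f : R -> R) (T : R) : periodic f T ->
  forall a (j : int), f (a + T *~ j) = f a.
Proof.
move=> hf a [n|n].
  by rewrite -pmulrn periodicn.
rewrite NegzE mulrNz -pmulrn.
by have := periodicn hf n.+1 (a - T *+ n.+1); rewrite subrK => ->.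
Qed.

Lemma ee_shift (R : realType) (x : R) (j : int) : ee (x + j%:~R) = ee x.
Proof.
rewrite /ee.
have -> : 2 * pi * (x + j%:~R) = 2 * pi * x + (pi *+ 2) *~ j :> R.
  by rewrite -mulrzr mulrDr -mulr_natl; ring.
by rewrite (per_int (@cosD2pi R)) (per_int (@sinD2pi R)).
Qed.

Lemma eq_frac_cong (R : realType) (D : nat) (k k' : int) : (0 < D)%N ->
  (D%:Z %| k - k')%Z -> eq_frac R k D = eq_frac R k' D.
Proof.
move=> hD /dvdzP[j hj].
have -> : k = k' + j * D%:Z by rewrite -hj; ring.
rewrite /eq_frac rmorphD rmorphM /= mulrDl -mulrA.
have nz : (D%:Z)%:~R != 0 :> R by rewrite intr_eq0 -lt0n.
by rewrite mulfV // mulr1 ee_shift.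
Qed.



Definition tup (D1 D2 : nat) := (('I_D1 * 'I_D1) * ('I_D2 * 'I_D2))%type.

Definition Fmap (D1 D2 : nat) (h1 : (0 < D1)%N) (h2 : (0 < D2)%N)
  (B1 C1 : 'I_D1) (B2 C2 : 'I_D2) : tup D2 D1 :=
  let Y1 := (YZ B1 C1).1 in let Z1 := (YZ B1 C1).2 in
  let Y2 := (YZ B2 C2).1 in let Z2 := (YZ B2 C2).2 in
  let b1 := Y2 * D1%:Z - Z2 * (B1 : nat)%:Z in
  let b2 := Y1 * D2%:Z - Z1 * (B2 : nat)%:Z in
  ((ordz h2 b1, ordz h2 (Z1 + divz b2 D1%:Z * b1)),
   (ordz h1 b2, ordz h1 (Z2 + divz b1 D2%:Z * b2))).

Lemma modzE' (x d : int) : modz x d = x - divz x d * d.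
Proof. by rewrite {2}(divz_eq x d) addrC addKr. Qed.

Lemma F_RelW (D1 D2 : nat) (h1 : (0 < D1)%N) (h2 : (0 < D2)%N)
  (B1 C1 : 'I_D1) (B2 C2 : 'I_D2) :
  coprime3 B1 C1 D1 -> coprime3 B2 C2 D2 ->
  let q' := Fmap h1 h2 B1 C1 B2 C2 in
  RelW D1%:Z D2%:Z (B1 : nat)%:Z (C1 : nat)%:Z (B2 : nat)%:Z (C2 : nat)%:Z
    (q'.1.1 : nat)%:Z (q'.1.2 : nat)%:Z (q'.2.1 : nat)%:Z (q'.2.2 : nat)%:Z
    (YZ B1 C1).1 (YZ B1 C1).2 (YZ B2 C2).1 (YZ B2 C2).2.
Proof.
move=> c1 c2 /=.
have s1 := YZ_spec c1; have s2 := YZ_spec c2.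
set Y1 := (YZ B1 C1).1 in s1 *; set Z1 := (YZ B1 C1).2 in s1 *.
set Y2 := (YZ B2 C2).1 in s2 *; set Z2 := (YZ B2 C2).2 in s2 *.
rewrite !ordzE // !modzE'.
set b1 := Y2 * D1%:Z - Z2 * (B1 : nat)%:Z.
set b2 := Y1 * D2%:Z - Z1 * (B2 : nat)%:Z.
split => //.
- by apply/dvdzP; exists (divz b1 D2%:Z); rewrite /b1 /b2; ring.
- by apply/dvdzP; exists (divz b2 D1%:Z); rewrite /b1 /b2; ring.
split.
- by apply/dvdzP; exists (- divz (Z1 + divz b2 D1%:Z * b1) D2%:Z); rewrite /b1 /b2; ring.
- by apply/dvdzP; exists (- divz (Z2 + divz b1 D2%:Z * b2) D1%:Z); rewrite /b1 /b2; ring.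
Qed.

Definition pl (D1 D2 : nat) (B1 C1 : 'I_D1) (B2 C2 : 'I_D2) : bool :=
  ((D1%:Z * (C2 : nat)%:Z + (B1 : nat)%:Z * (B2 : nat)%:Z + (C1 : nat)%:Z * D2%:Z)
     == 0 %[mod (D1 * D2)%N%:Z])%Z.

Lemma plE (D1 D2 : nat) (B1 C1 : 'I_D1) (B2 C2 : 'I_D2) :
  pl B1 C1 B2 C2 = (D1%:Z * D2%:Z %| D1%:Z * (C2 : nat)%:Z + (B1 : nat)%:Z * (B2 : nat)%:Z + (C1 : nat)%:Z * D2%:Z)%Z.
Proof. by rewrite /pl eqz_mod_dvd subr0 PoszM. Qed.

Lemma F_props (D1 D2 : nat) (h1 : (0 < D1)%N) (h2 : (0 < D2)%N)
  (B1 C1 : 'I_D1) (B2 C2 : 'I_D2) :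
  coprime3 B1 C1 D1 -> coprime3 B2 C2 D2 -> pl B1 C1 B2 C2 ->
  let q' := Fmap h1 h2 B1 C1 B2 C2 in
  [/\ coprime3 q'.1.1 q'.1.2 D2, coprime3 q'.2.1 q'.2.2 D1, pl q'.1.1 q'.1.2 q'.2.1 q'.2.2 &
    Rel D2%:Z D1%:Z (q'.1.1 : nat)%:Z (q'.1.2 : nat)%:Z (q'.2.1 : nat)%:Z (q'.2.2 : nat)%:Z
      (B1 : nat)%:Z (C1 : nat)%:Z (B2 : nat)%:Z (C2 : nat)%:Z].
Proof.
move=> c1 c2 p q'.
have RW := F_RelW h1 h2 c1 c2.
have nz1 : D1%:Z != 0 by rewrite gt_eqF // ltz_nat.
have nz2 : D2%:Z != 0 by rewrite gt_eqF // ltz_nat.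
rewrite plE in p.
have [Rs Pl] := Rel_sym nz1 nz2 p (ex_intro _ _ (ex_intro _ _ (ex_intro _ _ (ex_intro _ _ RW)))).
have Rs' := Rs.
case: Rs' => [Y1 [Z1 [Y2 [Z2 [d1 d2 _ _ _]]]]].
split => //.
- exact: coprime3_of d1.
- exact: coprime3_of d2.
- by rewrite plE.
Qed.

Lemma natz_inj (m n : nat) : m%:Z = n%:Z -> m = n.
Proof. by move=> [->]. Qed.

Lemma FK (D1 D2 : nat) (h1 : (0 < D1)%N) (h2 : (0 < D2)%N)
  (B1 C1 : 'I_D1) (B2 C2 : 'I_D2) :
  coprime3 B1 C1 D1 -> coprime3 B2 C2 D2 -> pl B1 C1 B2 C2 ->
  let q' := Fmap h1 h2 B1 C1 B2 C2 in
  Fmap h2 h1 q'.1.1 q'.1.2 q'.2.1 q'.2.2 = ((B1, C1), (B2, C2)).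
Proof.
move=> c1 c2 p q'.
have [c1' c2' p' Rs] := F_props h1 h2 c1 c2 p.
have RW := F_RelW h2 h1 c1' c2'.
rewrite -/q' in c1' c2' p' Rs RW.
have R2 : Rel D2%:Z D1%:Z (q'.1.1 : nat)%:Z (q'.1.2 : nat)%:Z (q'.2.1 : nat)%:Z (q'.2.2 : nat)%:Z
  (((Fmap h2 h1 q'.1.1 q'.1.2 q'.2.1 q'.2.2).1.1 : nat)%:Z)
  (((Fmap h2 h1 q'.1.1 q'.1.2 q'.2.1 q'.2.2).1.2 : nat)%:Z)
  (((Fmap h2 h1 q'.1.1 q'.1.2 q'.2.1 q'.2.2).2.1 : nat)%:Z)
  (((Fmap h2 h1 q'.1.1 q'.1.2 q'.2.1 q'.2.2).2.2 : nat)%:Z).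
  by do 4 eexists; exact: RW.
have hD1 : 0 < D1%:Z by rewrite ltz_nat.
have hD2 : 0 < D2%:Z by rewrite ltz_nat.
rewrite plE in p'.
have [e1 e2 e3 e4] := Rel_fun hD2 hD1 p' Rs R2 (ord_range _) (ord_range _) (ord_range _)
  (ord_range _) (ord_range _) (ord_range _) (ord_range _) (ord_range _).
move: (Fmap h2 h1 _ _ _ _) e1 e2 e3 e4 => [[x1 x2] [x3 x4]] /= e1 e2 e3 e4.
by rewrite (val_inj (natz_inj e1)) (val_inj (natz_inj e2)) (val_inj (natz_inj e3))
  (val_inj (natz_inj e4)).
Qed.

Definition kb (R : realType) (m1 m2 n1 n2 : int) (D1 D2 : nat)
  (B1 C1 : 'I_D1) (B2 C2 : 'I_D2) : R[i] :=
    if [&& coprime3 B1 C1 D1, coprime3 B2 C2 D2 & pl B1 C1 B2 C2]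
    then
      let Y1 := (YZ B1 C1).1 in let Z1 := (YZ B1 C1).2 in
      let Y2 := (YZ B2 C2).1 in let Z2 := (YZ B2 C2).2 in
      eq_frac R (m1 * (B1 : nat)%:Z + n1 * (Y1 * D2%:Z - Z1 * (B2 : nat)%:Z)) D1
      * eq_frac R (m2 * (B2 : nat)%:Z + n2 * (Y2 * D1%:Z - Z2 * (B1 : nat)%:Z)) D2
    else 0.

Lemma Kl3E (R : realType) (m1 m2 n1 n2 : int) (D1 D2 : nat) :
  Kl3 R m1 m2 n1 n2 D1 D2 =
  \sum_(B1 : 'I_D1) \sum_(C1 : 'I_D1) \sum_(B2 : 'I_D2) \sum_(C2 : 'I_D2)
     kb R m1 m2 n1 n2 B1 C1 B2 C2.
Proof. by []. Qed.

Lemma phase (R : realType) (m1 m2 n1 n2 : int) (D1 D2 : nat) (h1 : (0 < D1)%N) (h2 : (0 < D2)%N)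
  (B1 C1 : 'I_D1) (B2 C2 : 'I_D2) :
  coprime3 B1 C1 D1 -> coprime3 B2 C2 D2 -> pl B1 C1 B2 C2 ->
  let q' := Fmap h1 h2 B1 C1 B2 C2 in
  kb R m1 m2 n1 n2 B1 C1 B2 C2 = kb R n2 n1 m2 m1 q'.1.1 q'.1.2 q'.2.1 q'.2.2.
Proof.
move=> c1 c2 p q'.
have [c1' c2' p' _] := F_props h1 h2 c1 c2 p.
have [_ _ d3 d4 _] := F_RelW h1 h2 c1 c2.
have [_ _ d3' d4' _] := F_RelW h2 h1 c1' c2'.
have E := FK h1 h2 c1 c2 p.
rewrite -/q' in c1' c2' p' d3 d4 d3' d4' E.
clearbody q'.
rewrite E /= in d3' d4'.
rewrite /kb c1 c2 p c1' c2' p' /=.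
rewrite [in RHS]mulrC; congr (_ * _); apply: eq_frac_cong => //.
- set Y1 := (YZ B1 C1).1 in d4 *; set Z1 := (YZ B1 C1).2 in d4 *.
  set Y2' := (YZ q'.2.1 q'.2.2).1 in d3' *; set Z2' := (YZ q'.2.1 q'.2.2).2 in d3' *.
  set b2 := Y1 * D2%:Z - Z1 * (B2 : nat)%:Z in d4 *.
  have -> : m1 * (B1 : nat)%:Z + n1 * b2 - (n1 * (q'.2.1 : nat)%:Z + m1 * (Y2' * D2%:Z - Z2' * (q'.1.1 : nat)%:Z))
    = n1 * (b2 - (q'.2.1 : nat)%:Z) - m1 * (Y2' * D2%:Z - Z2' * (q'.1.1 : nat)%:Z - (B1 : nat)%:Z) by ring.
  by rewrite rpredB // dvdz_mull.
- set Y2 := (YZ B2 C2).1 in d3 *; set Z2 := (YZ B2 C2).2 in d3 *.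
  set Y1' := (YZ q'.1.1 q'.1.2).1 in d4' *; set Z1' := (YZ q'.1.1 q'.1.2).2 in d4' *.
  set b1 := Y2 * D1%:Z - Z2 * (B1 : nat)%:Z in d3 *.
  have -> : m2 * (B2 : nat)%:Z + n2 * b1 - (n2 * (q'.1.1 : nat)%:Z + m2 * (Y1' * D1%:Z - Z1' * (q'.2.1 : nat)%:Z))
    = n2 * (b1 - (q'.1.1 : nat)%:Z) - m2 * (Y1' * D1%:Z - Z1' * (q'.2.1 : nat)%:Z - (B2 : nat)%:Z) by ring.
  by rewrite rpredB // dvdz_mull.
Qed.



Lemma sum4 (V : nmodType) (D1 D2 : nat) (F : 'I_D1 -> 'I_D1 -> 'I_D2 -> 'I_D2 -> V) :
  \sum_(B1 : 'I_D1) \sum_(C1 : 'I_D1) \sum_(B2 : 'I_D2) \sum_(C2 : 'I_D2) F B1 C1 B2 C2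
  = \sum_(q : tup D1 D2) F q.1.1 q.1.2 q.2.1 q.2.2.
Proof.
rewrite /tup -(pair_bigA _ (fun a b => F a.1 a.2 b.1 b.2)) /=.
rewrite -(pair_bigA _ (fun x y => \sum_(b : 'I_D2 * 'I_D2) F x y b.1 b.2)) /=.
apply: eq_bigr => B1 _; apply: eq_bigr => C1 _.
by rewrite -(pair_bigA _ (fun x y => F B1 C1 x y)).
Qed.

Definition V12 (D1 D2 : nat) (q : tup D1 D2) : bool :=
  [&& coprime3 q.1.1 q.1.2 D1, coprime3 q.2.1 q.2.2 D2 & pl q.1.1 q.1.2 q.2.1 q.2.2].

Lemma filt (R : realType) (m1 m2 n1 n2 : int) (D1 D2 : nat) :
  \sum_(q : tup D1 D2) kb R m1 m2 n1 n2 q.1.1 q.1.2 q.2.1 q.2.2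
  = \sum_(q : tup D1 D2 | V12 q) kb R m1 m2 n1 n2 q.1.1 q.1.2 q.2.1 q.2.2.
Proof.
rewrite [RHS]big_mkcond; apply: eq_bigr => q _.
by rewrite /V12 /kb; case: (_ && _).
Qed.

Lemma Kl3_sym (R : realType) (m1 m2 n1 n2 : int) (D1 D2 : nat)
  (h1 : (0 < D1)%N) (h2 : (0 < D2)%N) :
  Kl3 R m1 m2 n1 n2 D1 D2 = Kl3 R n2 n1 m2 m1 D2 D1.
Proof.
rewrite !Kl3E !sum4 !filt.
pose f12 := fun q : tup D1 D2 => Fmap h1 h2 q.1.1 q.1.2 q.2.1 q.2.2.
pose f21 := fun q : tup D2 D1 => Fmap h2 h1 q.1.1 q.1.2 q.2.1 q.2.2.
rewrite (reindex_onto f12 f21) /=; last first.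
  move=> [[B1 C1] [B2 C2]] /and3P[c1 c2 p].
  by rewrite /f12 /f21 /= (FK h2 h1 c1 c2 p).
symmetry; apply: eq_big.
- move=> [[B1 C1] [B2 C2]] /=; apply/idP/idP. 
  + move=> /andP[V /eqP E]; move: V; rewrite /V12 => /and3P[c1 c2 p].
    have [c1' c2' p' _] := F_props h2 h1 c1 c2 p.
    have E' : Fmap h2 h1 (f12 (B1, C1, (B2, C2))).1.1 (f12 (B1, C1, (B2, C2))).1.2
      (f12 (B1, C1, (B2, C2))).2.1 (f12 (B1, C1, (B2, C2))).2.2 = (B1, C1, (B2, C2)) := E.
    rewrite E' /= in c1' c2' p'.
    by rewrite c1' c2' p'.
  + move=> /and3P[c1 c2 p].
    have [c1' c2' p' _] := F_props h1 h2 c1 c2 p.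
    by rewrite /V12 /f12 /f21 c1' c2' p' /= (FK h1 h2 c1 c2 p).
- move=> [[B1 C1] [B2 C2]] /andP[V /eqP E]; move: V; rewrite /V12 => /and3P[c1 c2 p].
  have [c1' c2' p' _] := F_props h2 h1 c1 c2 p.
  have E' : Fmap h2 h1 (f12 (B1, C1, (B2, C2))).1.1 (f12 (B1, C1, (B2, C2))).1.2
    (f12 (B1, C1, (B2, C2))).2.1 (f12 (B1, C1, (B2, C2))).2.2 = (B1, C1, (B2, C2)) := E.
  rewrite E' /= in c1' c2' p'.
  by rewrite /= (phase R m1 m2 n1 n2 h1 h2 c1' c2' p').
Qed.

Unset Implicit Arguments. Set Strict Implicit.

Theorem lemma6 (R : realType) (D1 D2 : nat) (a b u t : int)
  (hD1 : (0 < D1)%N) (hD2 : (0 < D2)%N)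
  (ha : coprimez a D1%:Z) (hb : coprimez b D2%:Z) :
  Shat R a u t b D1 D2 = Shat R b t u a D2 D1.
Proof.
rewrite /Shat mulnC; congr (_ * _).
rewrite exchange_big; apply: eq_bigr => y _; apply: eq_bigr => x _.
rewrite (Kl3_sym R a _ _ b hD1 hD2).
by rewrite -!mulrA [X in _ * X]mulrC.
Qed.
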